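(* In the GLM setting of the context, assume Conditions (C1)–(C2). Define, for $\lambda\ge0$, the asymptotic mean squared error $$\mathrm{aMSE}(\lambda)=d(\gamma_2)\,\mathrm{trace}\{\boldsymbol s^{-2}(\boldsymbol\beta_2;\lambda)\boldsymbol v_2(\boldsymbol\beta_2)\}+n_2\lambda^2n_1^{-2}\,\boldsymbol\Delta(\boldsymbol\beta_2)^\top\boldsymbol X_1^\top\boldsymbol s^{-2}(\boldsymbol\beta_2;\lambda)\boldsymbol X_1\boldsymbol\Delta(\boldsymbol\beta_2),$$ where $\boldsymbol s(\boldsymbol\beta;\lambda)=\boldsymbol v_2(\boldsymbol\beta)+\lambda\boldsymbol v_1(\boldsymbol\beta)$, so that $\mathrm{aMSE}(0)=d(\gamma_2)\mathrm{trace}\{\boldsymbol v_2^{-1}(\boldsymbol\beta_2)\}$ is the asymptotic MSE of the target MLE $\widehat{\boldsymbol\beta}_2$. Then: (i) for each $n_2$ there is $\lambda_0>0$ such that $\mathrm{aMSE}(\lambda)<\mathrm{aMSE}(0)$ for all $\lambda\in(0,\lambda_0)$; if $\boldsymbol X_1\boldsymbol\Delta(\boldsymbol\beta_2)=\boldsymbol 0$ this holds for all $\lambda>0$; (ii) if $\boldsymbol X_1\boldsymbol\Delta(\boldsymbol\beta_2)\neq\boldsymbol 0$, then, with $\boldsymbol v_1,\boldsymbol v_2,d(\gamma_2),\boldsymbol X_1,\boldsymbol\Delta(\boldsymbol\beta_2)$ held fixed, there is a constant $C$ such that for all sufficiently large $n_2$ every $\lambda>0$ with $\mathrm{aMSE}(\lambda)\le\mathrm{aMSE}(0)$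 satisfies $\lambda\le Cn_2^{-1/2}$; that is, the range of $\lambda>0$ on which the asymptotic MSE of $\widetilde{\boldsymbol\beta}_2(\lambda)$ is below that of $\widehat{\boldsymbol\beta}_2$ has upper limit $O(n_2^{-1/2})$.
   Context: GLM setting. Fix $p\ge1$, an open convex $\Theta\subseteq\mathbb{R}^p$, known $b,c,d$ with $b$ twice differentiable, $b''>0$, $h=b'$. Source (fixed): $n_1$, $\boldsymbol X_1=(\boldsymbol X_{11},\dots,\boldsymbol X_{n_11})\in\mathbb{R}^{p\times n_1}$, fixed $\widehat{\boldsymbol\beta}_1$. Target: deterministic $\boldsymbol X_{i2}$, $\boldsymbol X_2=(\boldsymbol X_{12},\dots,\boldsymbol X_{n_22})$, independent $y_{i2}$ with density $c(y;\gamma_2)\exp[d(\gamma_2)^{-1}\{y\boldsymbol X_{i2}^\top\boldsymbol\beta_2-b(\boldsymbol X_{i2}^\top\boldsymbol\beta_2)\}]$, true $\boldsymbol\beta_2\in\Theta$. Estimator $\widetilde{\boldsymbol\beta}_2(\lambda)=\arg\max_{\boldsymbol\beta}O(\boldsymbol\beta;\lambda)$ with $O(\boldsymbol\beta;\lambda)=n_2^{-1}\sum_{i=1}^{n_2}\{y_{i2}\boldsymbol X_{i2}^\top\boldsymbol\beta-b(\boldsymbol X_{i2}^\top\boldsymbol\beta)\}-\lambda n_1^{-1}\sum_{i=1}^{n_1}\{h(\boldsymbol X_{i1}^\top\widehat{\boldsymbol\beta}_1)(\boldsymbol X_{i1}^\top\widehat{\boldsymbol\beta}_1-\boldsymbol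 X_{i1}^\top\boldsymbol\beta)+b(\boldsymbol X_{i1}^\top\boldsymbol\beta)-b(\boldsymbol X_{i1}^\top\widehat{\boldsymbol\beta}_1)\}$; $\boldsymbol\beta_2^\star(\lambda)$ the unique maximizer of $\lim_{n_2\to\infty}\mathbb{E}O(\boldsymbol\beta;\lambda)$. Notation: $\boldsymbol A(\boldsymbol X_j^\top\boldsymbol\beta)=\mathrm{diag}\{b''(\boldsymbol X_{ij}^\top\boldsymbol\beta)\}_{i=1}^{n_j}$; $\boldsymbol\Delta(\boldsymbol\beta)=\{h(\boldsymbol X_{i1}^\top\boldsymbol\beta)-h(\boldsymbol X_{i1}^\top\widehat{\boldsymbol\beta}_1)\}_{i=1}^{n_1}$; $\boldsymbol v_1(\boldsymbol\beta)=n_1^{-1}\boldsymbol X_1\boldsymbol A(\boldsymbol X_1^\top\boldsymbol\beta)\boldsymbol X_1^\top$; $\boldsymbol v_2(\boldsymbol\beta)=\lim_{n_2\to\infty}n_2^{-1}\boldsymbol X_2\boldsymbol A(\boldsymbol X_2^\top\boldsymbol\beta)\boldsymbol X_2^\top$. Condition (C1): for each $\boldsymbol\beta$, $\lim_{n_2\to\infty}n_2^{-1}\sum_{i=1}^{n_2}\{h(\boldsymbol X_{i2}^\top\boldsymbol\beta_2)\boldsymbol X_{i2}^\top\boldsymbol\beta-b(\boldsymbol X_{i2}^\top\boldsymbol\beta)\}$ exists and is finite. Condition (C2): for every $\boldsymbol\beta$ between $\boldsymbol\beta_2$ and $\boldsymbol\beta_2^\star(\lambda)$ inclusive, $\boldsymbol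 v_1(\boldsymbol\beta)$ and $\boldsymbol v_2(\boldsymbol\beta)$ exist and are positive definite. *)

(* Defs.v *)
From HB Require Import structures.
From mathcomp Require Import all_boot all_order all_algebra.
From mathcomp Require Import all_classical all_reals all_analysis.
Set Implicit Arguments. Unset Strict Implicit. Unset Printing Implicit Defensive.
Import Order.TTheory GRing.Theory Num.Theory.
Import numFieldNormedType.Exports.
Local Open Scope ring_scope.
Local Open Scope classical_set_scope.

Definition posdef {R : realType} (p : nat) (A : 'M[R]_p) : Prop :=
  A^T = A /\ forall x : 'cV[R]_p, x != 0 -> 0 < (x^T *m A *m x) 0 0.

Definition glm_open {R : realType} (p : nat) (Theta : set 'cV[R]_p) : Prop :=
  forall x, Theta x -> exists2 e : R, 0 < e &
    forall y : 'cV[R]_p, (forall i, `|y i 0 - x i 0| < e) -> Theta y.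
Definition glm_convex {R : realType} (p : nat) (Theta : set 'cV[R]_p) : Prop :=
  forall x y t, Theta x -> Theta y -> 0 <= t <= 1 ->
    Theta (t *: x + (1 - t) *: y).

Definition twice_diff {R : realType} (b : R -> R) : Prop :=
  forall x, derivable b x 1 /\ derivable b^`() x 1.

Definition glm_h {R : realType} (b : R -> R) : R -> R := b^`().
Definition glm_b2 {R : realType} (b : R -> R) : R -> R := b^`()^`().

Definition Amat {R : realType} (b : R -> R) (p n : nat)
  (X : 'M[R]_(p, n)) (beta : 'cV[R]_p) : 'M[R]_n :=
  diag_mx (\row_i glm_b2 b ((X^T *m beta) i 0)).

Definition v1 {R : realType} (b : R -> R) (p n1 : nat)
  (X1 : 'M[R]_(p, n1)) (beta : 'cV[R]_p) : 'M[R]_p :=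
  n1%:R^-1 *: (X1 *m Amat b X1 beta *m X1^T).

(* X_2 = (X_{12},...,X_{n2}) built from the (infinite) target design *)
Definition Xmat {R : realType} (p : nat) (X2 : nat -> 'cV[R]_p) (n : nat)
  : 'M[R]_(p, n) := \matrix_(i < p, j < n) X2 j i 0.

Definition v2seq {R : realType} (b : R -> R) (p : nat)
  (X2 : nat -> 'cV[R]_p) (beta : 'cV[R]_p) (n : nat) : 'M[R]_p :=
  n%:R^-1 *: (Xmat X2 n *m Amat b (Xmat X2 n) beta *m (Xmat X2 n)^T).

Definition v2_has_limit {R : realType} (b : R -> R) (p : nat)
  (X2 : nat -> 'cV[R]_p) (beta : 'cV[R]_p) (V : 'M[R]_p) : Prop :=
  forall i j, (fun n => v2seq b X2 beta n i j) @ \oo --> V i j.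

Definition v2 {R : realType} (b : R -> R) (p : nat)
  (X2 : nat -> 'cV[R]_p) (beta : 'cV[R]_p) : 'M[R]_p :=
  \matrix_(i, j) limn (fun n => v2seq b X2 beta n i j).

Definition Delta {R : realType} (b : R -> R) (p n1 : nat)
  (X1 : 'M[R]_(p, n1)) (bhat1 beta : 'cV[R]_p) : 'cV[R]_n1 :=
  \col_i (glm_h b ((X1^T *m beta) i 0) - glm_h b ((X1^T *m bhat1) i 0)).

(* expected target log-likelihood part (E y_{i2} = h(X_{i2}^T beta2)) *)
Definition C1seq {R : realType} (b : R -> R) (p : nat)
  (X2 : nat -> 'cV[R]_p) (beta2 beta : 'cV[R]_p) (n : nat) : R :=
  n%:R^-1 * \sum_(i < n)
    (glm_h b (((X2 i)^T *m beta2) 0 0) * ((X2 i)^T *m beta) 0 0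
     - b (((X2 i)^T *m beta) 0 0)).

Definition penalty {R : realType} (b : R -> R) (p n1 : nat)
  (X1 : 'M[R]_(p, n1)) (bhat1 beta : 'cV[R]_p) : R :=
  n1%:R^-1 * \sum_(i < n1)
    (glm_h b ((X1^T *m bhat1) i 0) * ((X1^T *m bhat1) i 0 - (X1^T *m beta) i 0)
     + b ((X1^T *m beta) i 0) - b ((X1^T *m bhat1) i 0)).

Definition Olim {R : realType} (b : R -> R) (p n1 : nat)
  (X1 : 'M[R]_(p, n1)) (bhat1 : 'cV[R]_p) (X2 : nat -> 'cV[R]_p)
  (beta2 : 'cV[R]_p) (lam : R) (beta : 'cV[R]_p) : R :=
  limn (C1seq b X2 beta2 beta) - lam * penalty b X1 bhat1 beta.

Definition aMSE {R : realType} (p n1 : nat) (dg : R) (V1 V2 : 'M[R]_p)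
  (X1 : 'M[R]_(p, n1)) (Del : 'cV[R]_n1) (n2 : nat) (lam : R) : R :=
  let s := V2 + lam *: V1 in
  let s2i := invmx s *m invmx s in
  dg * \tr (s2i *m V2)
  + n2%:R * lam ^+ 2 * (n1%:R ^+ 2)^-1
    * (Del^T *m X1^T *m s2i *m X1 *m Del) 0 0.

(* Main.v *)
Require Import Defs.
From HB Require Import structures.
From mathcomp Require Import all_boot all_order all_algebra.
From mathcomp Require Import all_classical all_reals all_analysis.
From mathcomp Require Import ring lra.
Import Order.TTheory GRing.Theory Num.Theory.
Import numFieldNormedType.Exports.
Local Open Scope ring_scope.
Local Open Scope classical_set_scope.

Definition qf {R : realType} {p : nat} (M : 'M[R]_p) (x : 'cV[R]_p) : R :=
  (x^T *m M *m x) 0 0.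
Definition bf {R : realType} {p : nat} (M : 'M[R]_p) (x y : 'cV[R]_p) : R :=
  (x^T *m M *m y) 0 0.
Definition n2v {R : realType} {p : nat} (x : 'cV[R]_p) : R := (x^T *m x) 0 0.

Lemma n2vE {R : realType} {p : nat} (x : 'cV[R]_p) :
  n2v x = \sum_i x i 0 ^+ 2.
Proof. by rewrite /n2v mxE; apply: eq_bigr => i _; rewrite mxE expr2. Qed.

Lemma n2v_ge0 {R : realType} {p : nat} (x : 'cV[R]_p) : 0 <= n2v x.
Proof. by rewrite n2vE; apply: sumr_ge0 => i _; apply: sqr_ge0. Qed.

Lemma bfC {R : realType} {p : nat} (M : 'M[R]_p) x y :
  M^T = M -> bf M x y = bf M y x.
Proof.
move=> hM; rewrite /bf; transitivity ((x^T *m M *m y)^T 0 0); first by rewrite [RHS]mxE.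
by rewrite !trmx_mul trmxK hM mulmxA.
Qed.

Lemma qf_expand {R : realType} {p : nat} (M : 'M[R]_p) a b (t : R) :
  qf M (a + t *: b) = qf M a + t * (bf M a b + bf M b a) + t ^+ 2 * qf M b.
Proof.
rewrite /qf /bf; have -> : (a + t *: b)^T = a^T + t *: b^T by rewrite linearD linearZ.
rewrite !(mulmxDl, mulmxDr) -!scalemxAl -!scalemxAr !mxE.
rewrite expr2; lra.
Qed.

Lemma psd_of_posdef {R : realType} {p : nat} (M : 'M[R]_p) x :
  posdef M -> 0 <= qf M x.
Proof.
case=> _ hM; have [->|hx] := eqVneq x 0.
  by rewrite /qf mulmx0 mxE.
exact/ltW/hM.
Qed.

Lemma CS {R : realType} {p : nat} (M : 'M[R]_p) a b :
  posdef M -> bf M a b ^+ 2 <= qf M a * qf M b.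
Proof.
move=> hP; have hA := psd_of_posdef _ a hP.
have [->|hb] := eqVneq b 0.
  by rewrite /bf /qf !mulmx0 mxE expr2 mul0r mulr0.
have hQ : 0 < qf M b by case: hP => _ h; apply: h.
have hs := bfC _ a b (proj1 hP).
set X := bf M a b in hs *; set Q := qf M b in hQ *; set A := qf M a in hA *.
pose t := - X / Q.
have htq : t * Q = - X by rewrite /t mulrAC -mulrA divff ?mulr1 // gt_eqF.
have h := psd_of_posdef _ (a + t *: b) hP.
rewrite qf_expand -/A -/Q -hs -/X in h.
nra.
Qed.

Lemma posdef_unit {R : realType} {p : nat} (M : 'M[R]_p) :
  posdef M -> M \in unitmx.
Proof.
move=> [hs hM]; rewrite unitmxE unitfE; apply/negP => /det0P [v hv hvM].
have hx : v^T != 0 by apply: contra hv => /eqP h; rewrite -(trmxK v) h linear0.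
have := hM _ hx; rewrite /qf trmxK hvM mul0mx mxE.
by rewrite ltxx.
Qed.

Lemma qf_conj {R : realType} {p : nat} (M A : 'M[R]_p) x :
  qf (A^T *m M *m A) x = qf M (A *m x).
Proof. by rewrite /qf trmx_mul !mulmxA. Qed.

Lemma bf_e {R : realType} {p : nat} (M : 'M[R]_p) i :
  qf M (delta_mx i 0) = M i i.
Proof. by rewrite /qf trmx_delta -rowE -colE !mxE. Qed.

Lemma tr_qf {R : realType} {p : nat} (M : 'M[R]_p) :
  \tr M = \sum_i qf M (delta_mx i 0).
Proof. by apply: eq_bigr => i _; rewrite bf_e. Qed.

Lemma tr_psd {R : realType} {p : nat} (M : 'M[R]_p) :
  (forall x, 0 <= qf M x) -> 0 <= \tr M.
Proof. by move=> h; rewrite tr_qf; apply: sumr_ge0 => i _. Qed.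

Lemma delta_neq0 {R : realType} {p : nat} (i : 'I_p) : delta_mx i 0 != 0 :> 'cV[R]_p.
Proof.
apply/eqP => /matrixP /(_ i 0); rewrite !mxE !eqxx /=.
by move/eqP; rewrite oner_eq0.
Qed.

Lemma tr_pd {R : realType} {p : nat} (M : 'M[R]_p) : (0 < p)%N ->
  (forall x, x != 0 -> 0 < qf M x) -> 0 < \tr M.
Proof.
move=> hp h; rewrite tr_qf.
pose i0 : 'I_p := Ordinal hp.
rewrite (bigD1 i0) //=; apply: ltr_wpDr.
  apply: sumr_ge0 => i _; apply/ltW/h/delta_neq0.
exact/h/delta_neq0.
Qed.

Lemma posdef1 {R : realType} {p : nat} : posdef (1%:M : 'M[R]_p).
Proof.
split; first by rewrite trmx1.
move=> x hx; rewrite /qf mulmx1 -/(n2v x) n2vE.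
have [i hi] : exists i, x i 0 != 0.
  apply/existsP; apply: contraR hx; rewrite negb_exists => /forallP h.
  apply/eqP/matrixP => i j; rewrite (ord1 j) mxE; exact/eqP/negbNE/h.
rewrite (bigD1 i) //=; apply: ltr_pwDl; first by rewrite exprn_even_gt0.
by apply: sumr_ge0 => j _; apply: sqr_ge0.
Qed.

Lemma posdef_inv {R : realType} {p : nat} (M : 'M[R]_p) :
  posdef M -> posdef (invmx M).
Proof.
move=> hP; have hu := posdef_unit _ hP; case: (hP) => hs hM.
have hs' : (invmx M)^T = invmx M by rewrite trmx_inv hs.
split => // x hx; suff : 0 < qf (invmx M) x by [].
have -> : qf (invmx M) x = qf M (invmx M *m x).
  rewrite -qf_conj hs' -mulmxA mulmxV // mulmx1 //.
apply: hM; apply: contra hx => /eqP h.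
by rewrite -[x](mul1mx) -(mulmxV hu) -mulmxA h mulmx0.
Qed.

Lemma qf1 {R : realType} {p : nat} (x : 'cV[R]_p) : qf 1%:M x = n2v x.
Proof. by rewrite /qf mulmx1. Qed.

Lemma frob {R : realType} {p : nat} (M : 'M[R]_p) z :
  M^T = M -> n2v (M *m z) <= (\sum_i n2v (M *m delta_mx i 0)) * n2v z.
Proof.
move=> hs; rewrite n2vE mulr_suml; apply: ler_sum => i _.
have -> : (M *m z) i 0 = bf 1%:M (M *m delta_mx i 0) z.
  by rewrite /bf mulmx1 trmx_mul hs trmx_delta -rowE -row_mul [RHS]mxE.
rewrite -!qf1; exact: CS posdef1.
Qed.

Lemma mu_bound {R : realType} {p : nat} (M : 'M[R]_p) y :
  posdef M -> n2v y <= \tr (invmx M) * qf M y.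
Proof.
move=> hP; have hu := posdef_unit _ hP; have hs := proj1 hP.
have hs' : (invmx M)^T = invmx M by rewrite trmx_inv hs.
rewrite n2vE /mxtrace mulr_suml; apply: ler_sum => i _.
have -> : y i 0 = bf M (invmx M *m delta_mx i 0) y.
  rewrite /bf trmx_mul hs' trmx_delta -(mulmxA _ (invmx M) M).
  by rewrite mulVmx // mulmx1 -rowE [RHS]mxE.
have -> : invmx M i i = qf M (invmx M *m delta_mx i 0).
  by rewrite -qf_conj hs' -mulmxA mulmxV // mulmx1 bf_e.
exact: CS.
Qed.

Lemma n2v_add {R : realType} {p : nat} (a b : 'cV[R]_p) :
  n2v (a + b) <= 2 * n2v a + 2 * n2v b.
Proof.
rewrite !n2vE !mulr_sumr -big_split /=; apply: ler_sum => i _.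
rewrite !mxE; have := sqr_ge0 (a i 0 - b i 0); rewrite !expr2; nra.
Qed.

Lemma n2vZ {R : realType} {p : nat} (a : 'cV[R]_p) t :
  n2v (t *: a) = t ^+ 2 * n2v a.
Proof.
rewrite !n2vE mulr_sumr; apply: eq_bigr => i _; rewrite mxE; exact: exprMn.
Qed.

Lemma qfDZ {R : realType} {p : nat} (A B : 'M[R]_p) l x :
  qf (A + l *: B) x = qf A x + l * qf B x.
Proof. by rewrite /qf mulmxDr mulmxDl -scalemxAr -scalemxAl !mxE. Qed.

Lemma posdef_S {R : realType} {p : nat} (V1 V2 : 'M[R]_p) l :
  posdef V1 -> posdef V2 -> 0 <= l -> posdef (V2 + l *: V1).
Proof.
move=> h1 h2 hl; split.
  by rewrite linearD linearZ /= (proj1 h1) (proj1 h2).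
move=> x hx; suff : 0 < qf (V2 + l *: V1) x by [].
rewrite qfDZ; apply: ltr_wpDr; first exact: mulr_ge0 (psd_of_posdef _ _ h1).
exact: (proj2 h2).
Qed.

Lemma aMSE_eq {R : realType} {p n1 : nat} (dg : R) (V1 V2 : 'M[R]_p) X1
  (Del : 'cV[R]_n1) n2 l :
  (invmx (V2 + l *: V1))^T = invmx (V2 + l *: V1) ->
  aMSE dg V1 V2 X1 Del n2 l =
  dg * \tr (invmx (V2 + l *: V1) *m V2 *m invmx (V2 + l *: V1))
  + n2%:R * l ^+ 2 * (n1%:R ^+ 2)^-1 * n2v (invmx (V2 + l *: V1) *m (X1 *m Del)).
Proof.
move=> hP; rewrite /aMSE /n2v; set P := invmx _.
congr (_ * _ + _ * _).
  by rewrite -mulmxA mxtrace_mulC.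
by rewrite trmx_mul hP trmx_mul !mulmxA.
Qed.

Lemma ident {R : realType} {p : nat} (V1 V2 : 'M[R]_p) l :
  V2 \in unitmx -> (V2 + l *: V1) \in unitmx ->
  invmx V2 = invmx (V2 + l *: V1) *m V2 *m invmx (V2 + l *: V1)
       + (2 * l) *: (invmx (V2 + l *: V1) *m V1 *m invmx (V2 + l *: V1))
       + l ^+ 2 *: (invmx (V2 + l *: V1) *m V1 *m invmx V2 *m V1 *m invmx (V2 + l *: V1)).
Proof.
move=> h2 hS; set P := invmx (V2 + l *: V1).
have e : (V2 + l *: V1) *m invmx V2 *m (V2 + l *: V1) =
   V2 + (2 * l) *: V1 + l ^+ 2 *: (V1 *m invmx V2 *m V1).
  rewrite !(mulmxDl, mulmxDr) -!scalemxAl -!scalemxAr mulmxV // mul1mx.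
  rewrite -mulmxA mulVmx // mulmx1 scalerA -expr2 mulr2n.
  by rewrite mul1mx mulrDl mul1r scalerDl !addrA.
have E : P *m ((V2 + l *: V1) *m invmx V2 *m (V2 + l *: V1)) *m P = invmx V2.
  by rewrite !mulmxA mulVmx // mul1mx -mulmxA mulmxV // mulmx1.
rewrite -{1}E e !(mulmxDl, mulmxDr) -?scalemxAr -?scalemxAl -?scalemxAr !mulmxA.
by [].
Qed.

Definition Fr {R : realType} {p : nat} (M : 'M[R]_p) : R :=
  \sum_i n2v (M *m delta_mx i 0).

Lemma Fr_ge0 {R : realType} {p : nat} (M : 'M[R]_p) : 0 <= Fr M.
Proof. by apply: sumr_ge0 => i _; apply: n2v_ge0. Qed.

Lemma core {R : realType} {p n1 : nat} (dg : R) (V1 V2 : 'M[R]_p) X1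
  (Del : 'cV[R]_n1) n2 l :
  (0 < p)%N -> posdef V1 -> posdef V2 -> 0 < l ->
  let aM := aMSE dg V1 V2 X1 Del n2 in
  let w := X1 *m Del in
  exists TN TQ q : R,
    [/\ 0 < TN, 0 <= TQ, 0 <= q & q <= \tr (invmx V1) * n2v w * TN] /\
    [/\ 2 * l * TN + l ^+ 2 * TQ <= \tr (invmx V2),
     n2v w <= 2 * Fr V2 * q + 2 * l ^+ 2 * Fr V1 * q
     & aM 0 - aM l = dg * (2 * l * TN + l ^+ 2 * TQ)
         - n2%:R * l ^+ 2 * (n1%:R ^+ 2)^-1 * q].
Proof.
move=> hp h1 h2 hl aM w.
have hS := posdef_S _ _ _ h1 h2 (ltW hl).
have hu := posdef_unit _ hS; have hu2 := posdef_unit _ h2.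
have hi2 := posdef_inv _ h2.
set S := V2 + l *: V1 in hS hu.
set P := invmx S.
have hP : P^T = P by rewrite trmx_inv (proj1 hS).
have hV1 := proj1 h1; have hV2 := proj1 h2.
have hPx : forall x : 'cV[R]_p, x != 0 -> P *m x != 0.
  move=> x hx; apply: contra hx => /eqP h.
  by rewrite -[x]mul1mx -(mulmxV hu) -mulmxA -/P h mulmx0.
pose N := P *m V1 *m P.
pose Qm := P *m V1 *m invmx V2 *m V1 *m P.
have hN : forall x, qf N x = qf V1 (P *m x).
  by move=> x; rewrite -qf_conj /N hP.
have hQ : forall x, 0 <= qf Qm x.
  move=> x; have -> : Qm = (V1 *m P)^T *m invmx V2 *m (V1 *m P).
    by rewrite trmx_mul hP hV1 /Qm !mulmxA.
  by rewrite qf_conj; apply: psd_of_posdef.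
have hV : forall x, 0 <= qf (P *m V2 *m P) x.
  by move=> x; rewrite -{1}hP qf_conj; apply: psd_of_posdef.
have hid := ident _ _ _ hu2 hu; rewrite -/S -/P in hid.
have htr : \tr (invmx V2) = \tr (P *m V2 *m P) + 2 * l * \tr N + l ^+ 2 * \tr Qm.
  by rewrite {1}hid !mxtraceD !mxtraceZ.
have hTN : 0 < \tr N.
  by apply: tr_pd => // x hx; rewrite hN; apply: (proj2 h1); apply: hPx.
have hTV := tr_psd _ hV.
have hTQ := tr_psd _ hQ.
exists (\tr N), (\tr Qm), (n2v (P *m w)); split; split => //.
- exact: n2v_ge0.
- apply: (le_trans (frob _ _ hP)).
  rewrite [X in _ <= X]mulrAC; apply: ler_wpM2r; first exact: n2v_ge0.
  rewrite [\tr N]tr_qf mulr_sumr; apply: ler_sum => i _.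
  by rewrite hN; apply: mu_bound.
- by rewrite htr; lra.
- have e : forall z : 'cV[R]_p, V2 *m (P *m z) + l *: (V1 *m (P *m z)) = z.
    move=> z; rewrite !mulmxA scalemxAl -mulmxDl scalemxAl -mulmxDl -/S /P.
    by rewrite mulmxV // mul1mx.
  rewrite -{1}(e w).
  apply: (le_trans (n2v_add _ _)); rewrite n2vZ.
  have f1 := frob _ (P *m w) hV1; have f2 := frob _ (P *m w) hV2.
  rewrite /Fr; have := sqr_ge0 l; nra.
- rewrite /aM !aMSE_eq //.
  + rewrite scale0r addr0 -/S -/P mulVmx // mul1mx expr0n /= mulr0 mul0r mul0r addr0.
    rewrite htr; lra.
  + by rewrite scale0r addr0 trmx_inv hV2.
Qed.

Lemma part_i {R : realType} {p n1 : nat} (dg : R) (V1 V2 : 'M[R]_p) X1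
  (Del : 'cV[R]_n1) n2 :
  (0 < p)%N -> 0 < dg -> posdef V1 -> posdef V2 ->
  let aM := aMSE dg V1 V2 X1 Del n2 in
  (exists2 lam0 : R, 0 < lam0 &
        forall lam : R, 0 < lam < lam0 -> aM lam < aM 0) /\
     (X1 *m Del = 0 -> forall lam : R, 0 < lam -> aM lam < aM 0).
Proof.
move=> hp hd h1 h2 aM.
have hT1 : 0 <= \tr (invmx V1).
  by apply: tr_psd => x; apply: psd_of_posdef; apply: posdef_inv.
set c := (n1%:R ^+ 2)^-1 : R.
have hc : 0 <= c by rewrite /c invr_ge0 exprn_ge0.
set W := n2v (X1 *m Del).
have hW : 0 <= W by apply: n2v_ge0.
set K := n2%:R * c * \tr (invmx V1) * W.
have hK : 0 <= K by rewrite /K !mulr_ge0.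
split.
  exists (dg / (K + 1)); first by rewrite divr_gt0 // ltr_wpDl.
  move=> l /andP [hl hl0].
  have [TN [TQ [q [[hTN hTQ hq hqb] [_ _ hG]]]]] := core dg V1 V2 X1 Del n2 l hp h1 h2 hl.
  rewrite -subr_gt0 -/aM hG -/W -/c.
  have hKl : K * l < dg.
    rewrite ltr_pdivlMr ?ltr_wpDl // in hl0; nra.
  have hA : 0 <= n2%:R * l ^+ 2 * c by apply: mulr_ge0 => //; apply: mulr_ge0; [exact: ler0n | exact: sqr_ge0].
  have e1 : n2%:R * l ^+ 2 * c * q <= l * (K * l) * TN.
    have := ler_wpM2l hA hqb; rewrite /K => h; apply: (le_trans h).
    rewrite le_eqVlt; apply/orP; left; apply/eqP; rewrite /W; ring.
  have e2 : l * (K * l) * TN < l * dg * TN by rewrite ltr_pM2r // ltr_pM2l.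
  have e3 : 0 <= l ^+ 2 * TQ by rewrite mulr_ge0 ?sqr_ge0.
  nra.
move=> hw0 l hl.
have [TN [TQ [q [[hTN hTQ hq hqb] [_ _ hG]]]]] := core dg V1 V2 X1 Del n2 l hp h1 h2 hl.
rewrite -subr_gt0 -/aM hG.
have hq0 : q = 0.
  by apply/eqP; rewrite eq_le hq andbT; move: hqb; rewrite hw0 /n2v mulmx0 mxE !mulr0 mul0r.
rewrite hq0 mulr0 subr0; apply: mulr_gt0 => //.
by apply: ltr_pwDl; [rewrite !mulr_gt0 | rewrite mulr_ge0 ?sqr_ge0].
Qed.

Lemma part_ii {R : realType} {p n1 : nat} (dg : R) (V1 V2 : 'M[R]_p) X1
  (Del : 'cV[R]_n1) :
  (0 < p)%N -> (0 < n1)%N -> 0 < dg -> posdef V1 -> posdef V2 ->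
  X1 *m Del != 0 ->
  exists C : R, exists N : nat, forall n2 : nat, (N <= n2)%N ->
    forall lam : R, 0 < lam ->
      aMSE dg V1 V2 X1 Del n2 lam <= aMSE dg V1 V2 X1 Del n2 0 ->
      lam <= C * (Num.sqrt (n2%:R))^-1.
Proof.
move=> hp hn1 hd h1 h2 hw.
set c := (n1%:R ^+ 2)^-1 : R.
have hc : 0 < c by rewrite /c invr_gt0 exprn_gt0 // ltr0n.
set W := n2v (X1 *m Del).
have hW : 0 < W by rewrite /W -qf1; apply: (proj2 posdef1).
set B0 := dg * \tr (invmx V2).
have hB0 : 0 <= B0.
  rewrite /B0 mulr_ge0 ?(ltW hd) //.
  by apply: tr_psd => x; apply: psd_of_posdef; apply: posdef_inv.
set K := 2 * (Fr V1 + Fr V2) + 1.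
have hF1 := Fr_ge0 V1; have hF2 := Fr_ge0 V2.
have hK : 1 <= K by rewrite /K lerDr mulr_ge0 // addr_ge0.
set D := K * B0 / (c * W).
have hD : 0 <= D by rewrite /D; apply: divr_ge0; apply: mulr_ge0; lra.
have hDe : D * (c * W) = K * B0 by rewrite /D mulfVK // mulf_neq0 // gt_eqF.
exists (D + 1), (Num.truncn D).+1 => n2 hn2 l hl hle.
have hN : D < n2%:R.
  apply: (lt_le_trans (truncnS_gt D)); by rewrite ler_nat.
have [TN [TQ [q [[hTN hTQ hq hqb] [hB hlow hG]]]]] := core dg V1 V2 X1 Del n2 l hp h1 h2 hl.
rewrite -subr_ge0 hG -/c -/W in hle.
have hnq : n2%:R * l ^+ 2 * c * q <= B0.
  have : dg * (2 * l * TN + l ^+ 2 * TQ) <= B0 by rewrite /B0 ler_pM2l.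
  lra.
have hn0 : 0 < n2%:R :> R by apply: le_lt_trans hN.
have hs2 : Num.sqrt (n2%:R) ^+ 2 = n2%:R :> R by rewrite sqr_sqrtr // ltW.
have hs : 0 < Num.sqrt (n2%:R) :> R by rewrite sqrtr_gt0.
set s := Num.sqrt (n2%:R) in hs2 hs *.
set n := n2%:R : R in hN hn0 hnq hs2 *.
have hcW : 0 < c * W by apply: mulr_gt0.
have hql : 0 <= l ^+ 2 * q by rewrite mulr_ge0 ?sqr_ge0.
have [hl1|hl1] := leP 1 l.
  have hl2 : 1 <= l ^+ 2 by rewrite expr2; nra.
  have hqq : q <= l ^+ 2 * q by rewrite ler_peMl.
  have a2 : Fr V2 * q <= Fr V2 * (l ^+ 2 * q) by rewrite ler_wpM2l.
  have hWK : W <= K * (l ^+ 2 * q).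
    apply: (le_trans hlow); rewrite /K.
    have -> : 2 * l ^+ 2 * Fr V1 * q = 2 * Fr V1 * (l ^+ 2 * q) by ring.
    lra.
  have : n * (c * W) <= D * (c * W).
    rewrite hDe; apply: (le_trans (y := K * (n * l ^+ 2 * c * q))).
      have -> : K * (n * l ^+ 2 * c * q) = n * c * (K * (l ^+ 2 * q)) by ring.
      rewrite mulrA; apply: ler_wpM2l => //; apply: mulr_ge0; lra.
    by apply: ler_wpM2l; lra.
  rewrite ler_pM2r // => hnd; lra.
have hl2 : l ^+ 2 <= 1 by rewrite expr2; nra.
have a1 : Fr V1 * (l ^+ 2 * q) <= Fr V1 * q.
  by rewrite ler_wpM2l // ler_piMl.
have hWK : W <= K * q.
  apply: (le_trans hlow); rewrite /K.
  have -> : 2 * l ^+ 2 * Fr V1 * q = 2 * (Fr V1 * (l ^+ 2 * q)) by ring.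
  lra.
have hnl : n * l ^+ 2 <= D.
  rewrite -(ler_pM2r hcW) hDe.
  apply: (le_trans (y := K * (n * l ^+ 2 * c * q))); last by apply: ler_wpM2l; lra.
  have -> : K * (n * l ^+ 2 * c * q) = n * l ^+ 2 * c * (K * q) by ring.
  have -> : n * l ^+ 2 * (c * W) = n * l ^+ 2 * c * W by ring.
  have hnlc : 0 <= n * l ^+ 2 * c.
    apply: mulr_ge0; last exact: ltW.
    apply: mulr_ge0; [lra | exact: sqr_ge0].
  by apply: ler_wpM2l.
rewrite ler_pdivlMr //.
rewrite leNgt; apply/negP => hc2.
have : (D + 1) ^+ 2 < (l * s) ^+ 2 by rewrite ltrXn2r // ?nnegrE; lra.
rewrite exprMn hs2 mulrC; nra.
Qed.

Theorem theorem2 (R : realType) (p n1 : nat) (Theta : set 'cV[R]_p)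
  (b d : R -> R) (gamma2 : R) (X1 : 'M[R]_(p, n1)) (bhat1 : 'cV[R]_p)
  (X2 : nat -> 'cV[R]_p) (beta2 : 'cV[R]_p) (bstar : R -> 'cV[R]_p) :
  (0 < p)%N -> (0 < n1)%N ->
  glm_open Theta -> glm_convex Theta -> Theta beta2 ->
  twice_diff b -> (forall x, 0 < glm_b2 b x) ->
  0 < d gamma2 ->
  (* (C1) *)
  (forall beta : 'cV[R]_p, exists l : R,
      C1seq b X2 beta2 beta @ \oo --> l) ->
  (* beta2*(lambda) is the unique maximizer over Theta of lim E O(.; lambda) *)
  (forall lam : R, 0 <= lam ->
      Theta (bstar lam) /\
      forall beta, Theta beta -> beta <> bstar lam ->
        Olim b X1 bhat1 X2 beta2 lam beta < Olim b X1 bhat1 X2 beta2 lam (bstar lam)) ->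
  (* (C2) *)
  (forall lam : R, 0 <= lam -> forall t : R, 0 <= t <= 1 ->
      let beta := (1 - t) *: beta2 + t *: bstar lam in
      posdef (v1 b X1 beta) /\
      exists V, v2_has_limit b X2 beta V /\ posdef V) ->
  let aM := aMSE (d gamma2) (v1 b X1 beta2) (v2 b X2 beta2) X1
                 (Delta b X1 bhat1 beta2) in
  (* (i) *)
  (forall n2 : nat,
     (exists2 lam0 : R, 0 < lam0 &
        forall lam : R, 0 < lam < lam0 -> aM n2 lam < aM n2 0) /\
     (X1 *m Delta b X1 bhat1 beta2 = 0 ->
        forall lam : R, 0 < lam -> aM n2 lam < aM n2 0)) /\
  (* (ii) *)
  (X1 *m Delta b X1 bhat1 beta2 != 0 ->
     exists C : R, exists N : nat, forall n2 : nat, (N <= n2)%N ->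
       forall lam : R, 0 < lam -> aM n2 lam <= aM n2 0 ->
         lam <= C * (Num.sqrt (n2%:R))^-1).
Proof.
move=> hp hn1 _ _ _ _ _ hd _ _ hC2 aM.
have := hC2 0 (lexx 0) 0; rewrite lexx ler01 => /(_ isT) /=.
rewrite subr0 scale1r scale0r addr0 => -[h1 [V [hV h2]]].
have eV : v2 b X2 beta2 = V.
  apply/matrixP => i j; rewrite mxE; apply: cvg_lim => //; exact: hV.
rewrite /aM eV; split.
  by move=> n2; apply: part_i.
by move=> hw; apply: part_ii.
Qed.
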